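(* Let $n\ge 1$ and let $p\in\mathbb{P}^n$ be a word with no immediate repetitions. Then $p$ or $p^{+1}$ occurs as a subsequence of the first $n$ runs of the infinite zigzag word.
   Context: $\mathbb{P}$ denotes the positive integers; a word over $\mathbb{P}$ is a finite sequence of positive integers, $\mathbb{P}^n$ is the set of such words of length $n$, and $p(i)$ denotes the $i$th letter of $p$. The word $p^{+1}$ is defined by $p^{+1}(i)=p(i)+1$ for all $i$. A word $p$ has an immediate repetition if $p(i)=p(i+1)$ for some index $i$. The infinite zigzag word is the concatenation $R_1R_2R_3\cdots$ of runs, where each odd-indexed run $R_k$ is the ascending sequence $1,3,5,7,\dots$ of all odd positive integers and each even-indexed run $R_k$ is the descending sequence $\dots,8,6,4,2$ of all even positive integers. A word $p$ occurs as a subsequence of the first $m$ runs of the infinite zigzag word if $p$ can be written as a concatenation $p=q_1q_2\cdots q_m$ of (possibly empty) words such that for each odd $k$, $q_k$ is a strictly increasing sequence of odd integers, and for each even $k$, $q_k$ is a strictly decreasing sequence of even integers. *)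

(* Defs.v *)
From mathcomp Require Import all_boot.
Set Implicit Arguments. Unset Strict Implicit. Unset Printing Implicit Defensive.

Definition word_over_P (p : seq nat) : bool := all (fun a => 0 < a) p.

Definition shift1 (p : seq nat) : seq nat := map S p.

Definition has_imm_rep (p : seq nat) : Prop :=
  exists i, i.+1 < size p /\ nth 0 p i = nth 0 p i.+1.

Definition run_piece_ok (k : nat) (q : seq nat) : bool :=
  if odd k then all odd q && sorted ltn q
  else all (fun a => ~~ odd a) q && sorted gtn q.

Definition occurs_in_zigzag (m : nat) (p : seq nat) : Prop :=
  exists qs : seq (seq nat),
    [/\ size qs = m, flatten qs = p &
        forall k, k < m -> run_piece_ok k.+1 (nth [::] qs k)].

(* Main.v *)
Require Import Defs.
From mathcomp Require Import all_boot.
From mathcomp Require Import zify.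

Definition cst (a b : nat) : nat :=
  if odd a != odd b then 1 else if (if odd a then a < b else b < a) then 0 else 2.

Fixpoint F (a : nat) (r : seq nat) : nat :=
  match r with [::] => 0 | b :: r' => cst a b + F b r' end.

Lemma rpo_odd k k' q : odd k = odd k' -> run_piece_ok k q = run_piece_ok k' q.
Proof. by move=> H; rewrite /run_piece_ok H. Qed.

Lemma rpo_nil k : run_piece_ok k [::].
Proof. by rewrite /run_piece_ok; case: (odd k). Qed.

Lemma greedy r : forall a k, odd k = odd a ->
  exists t qs, [/\ size qs = F a r, flatten ((a::t)::qs) = a::r,
     run_piece_ok k (a::t) &
     forall j, j < F a r -> run_piece_ok (k + j.+1) (nth [::] qs j)].
Proof.
elim: r => [|b r IH] a k Hk.
  exists [::]; exists [::]; split => //.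
  by rewrite /run_piece_ok Hk; case Ho: (odd a) => /=; rewrite ?Ho.
rewrite /=.
case E: (odd a != odd b).
- have Hb : odd (k + 1) = odd b.
    by rewrite oddD Hk /=; move: E; case: (odd a); case: (odd b).
  have [t [qs [H1 H2 H3 H4]]] := IH b (k+1) Hb.
  exists [::], ((b::t)::qs); rewrite /cst E; split => /=.
  + by rewrite H1.
  + by move: H2 => /= ->.
  + by rewrite /run_piece_ok Hk; case Ho: (odd a) => /=; rewrite ?Ho.
  + case=> [|j] Hj /=; first exact: H3.
    have := H4 j; rewrite -addnA add1n; apply; lia.
- have Eab : odd a = odd b by apply/eqP; move/negbT: E; rewrite negbK.
  case C: (if odd a then a < b else b < a).
  + have [t [qs [H1 H2 H3 H4]]] := IH b k (etrans Hk Eab).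
    exists (b::t), qs; rewrite /cst E C; split => //.
    * by move: H2 => /= [->].
    * move: H3; rewrite /run_piece_ok Hk Eab /=.
      move: C; rewrite Eab; case: (odd b) => /= C; rewrite C //=.
  + have Hb : odd (k + 2) = odd b by rewrite oddD Hk Eab addbF.
    have [t [qs [H1 H2 H3 H4]]] := IH b (k+2) Hb.
    exists [::], ([::]::(b::t)::qs); rewrite /cst E C; split => /=.
    * by rewrite H1.
    * by move: H2 => /= ->.
    * by rewrite /run_piece_ok Hk; case Ho: (odd a) => /=; rewrite ?Ho.
    * case=> [|[|j]] Hj /=; first exact: rpo_nil.
        exact: H3.
      have := H4 j; rewrite -addnA; have -> : 2 + j.+1 = j.+3 by lia.
      apply; lia.
Qed.

Lemma F_sum a r : ~ has_imm_rep (a :: r) -> F a r + F a.+1 (map S r) = 2 * size r.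
Proof.
elim: r a => [|b r IH] a Hr //=.
have Hab : a != b.
  apply/eqP => Eab; apply: Hr; exists 0; split => //=.
have Hr' : ~ has_imm_rep (b :: r).
  move=> [i [Hi Hn]]; apply: Hr; exists i.+1; split => //=.
rewrite addnACA (IH b Hr') /cst /= !ltnS.
case: (odd a) (odd b) => [] [] /=; case: (ltngtP a b) => H //=;
  try (by move: Hab; rewrite H eqxx); lia.
Qed.

Lemma occ_ext m n p : occurs_in_zigzag m p -> m <= n -> occurs_in_zigzag n p.
Proof.
move=> [qs [H1 H2 H3]] Hmn.
exists (qs ++ nseq (n - m) [::]); split.
- rewrite size_cat size_nseq H1; lia.
- rewrite flatten_cat H2.
  suff -> : flatten (nseq (n - m) ([::] : seq nat)) = [::] by rewrite cats0.
  by elim: (n - m).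
- move=> k Hk; rewrite nth_cat H1; case: ltnP => Hkm; first exact: H3.
  rewrite nth_nseq; case: ifP => _; exact: rpo_nil.
Qed.

Lemma occ_word a r : exists m, occurs_in_zigzag m (a :: r) /\
  m = F a r + (if odd a then 1 else 2).
Proof.
case Ha: (odd a).
- have H0 : odd 1 = odd a by rewrite Ha.
  have [t [qs [H1 H2 H3 H4]]] := greedy r _ _ H0.
  exists (F a r + 1); split => //.
  exists ((a::t)::qs); split => /=; first by rewrite H1 addn1.
  + exact: H2.
  + case=> [|j] Hj //=; have := H4 j; rewrite add1n; apply; lia.
- have H0 : odd 2 = odd a by rewrite Ha.
  have [t [qs [H1 H2 H3 H4]]] := greedy r _ _ H0.
  exists (F a r + 2); split => //.
  exists ([::]::(a::t)::qs); split => /=; first by rewrite H1 addn2.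
  + exact: H2.
  + case=> [|[|j]] Hj //=; have := H4 j; rewrite add2n; apply; lia.
Qed.

Theorem proposition5p2 (n : nat) (p : seq nat) :
  1 <= n -> size p = n -> word_over_P p -> ~ has_imm_rep p ->
  occurs_in_zigzag n p \/ occurs_in_zigzag n (shift1 p).
Proof.
case: p => [|a r] Hn Hs _ Hr; first by rewrite -Hs in Hn.
have Hsum := @F_sum a r Hr.
have [m1 [O1 E1]] := occ_word a r.
have [m2 [O2 E2]] := occ_word a.+1 (map S r).
move: Hs => /= Hs.
have : m1 <= n \/ m2 <= n.
  move: E2; rewrite /= E1; case: (odd a) => /=; lia.
case=> H; [left; exact: occ_ext O1 H | right; exact: occ_ext O2 H].
Qed.
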